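(* Let $X,Y$ be Polish spaces and $f\colon X\to Y$ continuous. Then $f$ is category-preserving if and only if the set of points of $X$ which are locally dense for $f$ is dense in $X$.
   Context: A continuous map $f\colon X\to Y$ between Polish spaces is category-preserving if $f^{-1}(A)$ is meager in $X$ for every meager $A\subseteq Y$ (equivalently, $f(U)$ is non-meager, or equivalently somewhere dense, for every nonempty open $U\subseteq X$). A point $x\in X$ is locally dense for $f$ if for every neighborhood $U$ of $x$ the set $\overline{f(U)}$ is a neighborhood of $f(x)$. *)

(* Defs.v *)
From HB Require Import structures.
From mathcomp Require Import all_boot all_order all_algebra.
From mathcomp Require Import all_classical all_reals all_analysis.
Set Implicit Arguments. Unset Strict Implicit. Unset Printing Implicit Defensive.
Import Order.TTheory GRing.Theory Num.Theory.
Local Open Scope classical_set_scope.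

Definition separable_space (T : topologicalType) : Prop :=
  exists2 D : set T, countable D & dense D.

(* A Polish space is rendered as a complete (pseudo)metric space which is
   Hausdorff (so the pseudometric is a genuine metric) and separable. *)
Definition polish_space (R : realType) (T : completePseudoMetricType R) : Prop :=
  hausdorff_space T /\ separable_space T.

Definition nowhere_dense (T : topologicalType) (A : set T) : Prop :=
  interior (closure A) = set0.

Definition meager (T : topologicalType) (A : set T) : Prop :=
  exists F : (set T)^nat, (forall n, nowhere_dense (F n)) /\ A `<=` \bigcup_n F n.

Definition category_preserving (X Y : topologicalType) (f : X -> Y) : Prop :=
  forall A : set Y, meager A -> meager (f @^-1` A).

Definition locally_dense_point (X Y : topologicalType) (f : X -> Y) (x : X) : Prop :=
  forall U : set X, nbhs x U -> nbhs (f x) (closure (f @` U)).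

Definition locally_dense_points (X Y : topologicalType) (f : X -> Y) : set X :=
  [set x | locally_dense_point f x].

(* Main.v *)
Require Import Defs.
From HB Require Import structures.
From mathcomp Require Import all_boot all_order all_algebra.
From mathcomp Require Import all_classical all_reals all_analysis.
Set Implicit Arguments. Unset Strict Implicit. Unset Printing Implicit Defensive.
Import Order.TTheory GRing.Theory Num.Theory.
Local Open Scope classical_set_scope.
Local Open Scope ring_scope.

Lemma nd_boundary (T : topologicalType) (K : set T) :
  closed K -> nowhere_dense (K `\` K°).
Proof.
move=> cK; rewrite /nowhere_dense -subset0 => y Hy.
have sub : closure (K `\` K°) `<=` K.
  by rewrite [X in _ `<=` X](closure_id K).1 //; apply: closureS => z [].
have yc : closure (K `\` K°) y by exact: interior_subset.
have [z [[Kz nKz] Iz]] := yc _ (nbhs_interior Hy).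
by case: nKz; exact: (filterS sub Iz).
Qed.

Lemma nd_dense_compl (T : topologicalType) (F : set T) :
  nowhere_dense F -> open (~` closure F) /\ dense (~` closure F).
Proof.
move=> nF; split; first exact/closed_openC/closed_closure.
move=> O O0 oO; apply/set0P/eqP => E.
have : O `<=` (closure F)°.
  rewrite -open_subsetE // => x Ox; apply: contrapT => nx.
  by have : (O `&` ~` closure F) x by []; rewrite E.
rewrite nF subset0 => O00; case: O0 => x; by rewrite O00.
Qed.

Lemma dir2 (X Y : topologicalType) (f : X -> Y) : continuous f ->
  dense (locally_dense_points f) -> category_preserving f.
Proof.
move=> cf dL A [F [nF AF]].
exists (fun n => f @^-1` closure (F n)); split; last first.
  move=> x /AF [n _ Fx]; exists n => //; exact: subset_closure.
move=> n; rewrite /nowhere_dense -subset0 => x Hx.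
set O := (closure (f @^-1` closure (F n)))°.
have [z [Oz Lz]] := dL O (ex_intro _ x Hx) (@open_interior _ _).
have nO : nbhs z O by apply: open_nbhs_nbhs; split => //; exact: open_interior.
have := Lz O nO.
have fO : f @` O `<=` closure (F n).
  move=> _ [p Op <-].
  have cp : closure (f @^-1` closure (F n)) p by exact: interior_subset.
  rewrite [X in X (f p)](closure_id _).1; last exact: closed_closure.
  move=> V /cf /= nV.
  have [q [Cq Vq]] := cp _ nV.
  by exists (f q).
have : closure (f @` O) `<=` closure (F n).
  rewrite [X in _ `<=` X](closure_id _).1; last exact: closed_closure.
  exact: closureS.
move=> sub /(filterS sub) Hn.
have : (closure (F n))° (f z) := Hn.
by rewrite nF.
Qed.

Lemma small_inv (R : realType) (e : R) : 0 < e -> exists n : nat, n.+1%:R^-1 < e.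
Proof.
move=> e0; exists (Num.truncn e^-1).
by rewrite -ltf_pV2 ?(posrE,divr_gt0)// ?invrK ?truncnS_gt// invr_gt0.
Qed.

Lemma baire_step (R : realType) (U : pseudoMetricType R) (G : set U) (V : set U) (n : nat) :
  open G -> dense G -> open V -> V !=set0 ->
  exists a r, 0 < r /\ r < n.+1%:R^-1 /\ ball a (r + r) `<=` V `&` G.
Proof.
move=> oG dG oV V0.
have [x [Vx Gx]] := dG V V0 oV.
have : nbhs x (V `&` G) by apply: open_nbhs_nbhs; split => //; exact: openI.
move=> /nbhs_ballP [e /= e0 He].
have h0 : 0 < n.+1%:R^-1 / 2 :> R by rewrite divr_gt0.
exists x, (Num.min (e / 2) (n.+1%:R^-1 / 2)); split; first by rewrite lt_min h0 andbT divr_gt0.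
split.
  rewrite gt_min; apply/orP; right.
  by rewrite ltr_pdivrMr // ltr_pMr ?ltr1n // invr_gt0.
move=> y Hy; apply: He; apply: (le_ball _ Hy).
by rewrite [leRHS]splitr lerD // ge_min lexx.
Qed.

Lemma baire_pm (R : realType) (U : completePseudoMetricType R) (G : (set U)^nat) :
  (forall n, open (G n) /\ dense (G n)) -> dense (\bigcap_n G n).
Proof.
move=> oG D D0 oD.
have Ar : forall p : nat * (U * R), exists q : U * R,
    0 < p.2.2 -> 0 < q.2 /\ q.2 < p.1.+1%:R^-1 /\
      ball q.1 (q.2 + q.2) `<=` ball p.2.1 p.2.2 `&` G p.1.
  move=> [n [a r]] /=.
  have [r0|_] := ltP 0 r; last by exists (a, r).
  have [||||a' [r' [H1 [H2 H3]]]] := @baire_step R U (G n) (ball a r)° n.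
  - exact: (oG n).1.
  - exact: (oG n).2.
  - exact: open_interior.
  - by exists a; apply: nbhs_singleton; apply: nbhs_interior; exact: nbhsx_ballx.
  exists (a', r') => _ /=; split => //; split => //.
  move=> y /H3 [/interior_subset ? ?]; by split.
have [g Hg] := choice Ar.
have [a0 [r0 [r00 [_ H0]]]] := baire_step 0 (oG 0%N).1 (oG 0%N).2 oD D0.
pose fix ar n := if n is p.+1 then g (p, ar p) else (a0, r0).
pose a n := (ar n).1.
pose r n := (ar n).2.
have rpos n : 0 < r n.
  elim: n => [//|n IH]; exact: (Hg (n, ar n) IH).1.
have Hstep n : r n.+1 < n.+1%:R^-1 /\
    ball (a n.+1) (r n.+1 + r n.+1) `<=` ball (a n) (r n) `&` G n.
  exact: (Hg (n, ar n) (rpos n)).2.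
have nest n m : (n <= m)%N -> ball (a m) (r m) `<=` ball (a n) (r n).
  elim: m => [|m IH]; first by rewrite leqn0 => /eqP ->.
  rewrite leq_eqVlt => /orP[/eqP -> //|/IH]; apply: subset_trans.
  move=> y /(le_ball _) Hy.
  have /(Hstep m).2 [] // : ball (a m.+1) (r m.+1 + r m.+1) y.
  by apply: Hy; rewrite lerDl ltW.
have am n m : (n <= m)%N -> ball (a n) (r n) (a m).
  by move=> nm; apply: nest nm _ _; exact: ballxx.
have cv : cvg (a @ \oo).
  apply: cauchy_cvg; apply: cauchy_exP => e e0.
  have [k Hk] := small_inv e0.
  exists (a k.+1); exists k.+1 => // m /= km.
  apply: (le_ball _ (am _ _ km)).
  exact: ltW (lt_trans (Hstep k).1 Hk).
set l := lim (a @ \oo).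
have Hl n : ball (a n) (r n + r n) l.
  have : nbhs l (ball l (r n)) by exact: nbhsx_ballx.
  move=> /cv [N _ HN].
  have := HN (maxn N n) (leq_maxl _ _).
  rewrite /= => Hb.
  apply: ball_triangle (am _ _ (leq_maxr N n)) _.
  exact: ball_sym.
exists l; split.
  by have [] := H0 _ (Hl 0%N).
move=> n _.
by have [] := (Hstep n).2 _ (Hl n.+1).
Qed.

Lemma dir1 (R : realType) (X Y : completePseudoMetricType R)
  (sX : separable_space X) (f : X -> Y) : continuous f ->
  category_preserving f -> dense (locally_dense_points f).
Proof.
move=> cf cp.
have [D0 cD0 dD0] := sX.
have /pcard_surjP [g gs] := cD0.
pose W (m : nat) : set X := match choice.unpickle m with
  | Some (i, k) => ball (g i) (k.+1%:R^-1) | None => set0 end.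
pose K m := closure (f @` W m).
pose M := \bigcup_m (K m `\` (K m)°).
have mM : meager M.
  exists (fun m => K m `\` (K m)°); split => //.
  move=> m; apply: nd_boundary; exact: closed_closure.
have [FX [nFX MFX]] := cp M mM.
have Gd := baire_pm (fun n => nd_dense_compl (nFX n)).
move=> O O0 oO.
have [x [Ox Gx]] := Gd O O0 oO.
exists x; split => //.
move=> U /nbhs_ballP [e /= e0 HU].
have [k Hk] := small_inv (divr_gt0 e0 (ltr0n R 2)).
set d : R := k.+1%:R^-1.
have d0 : 0 < d by rewrite /d invr_gt0.
have [y [Iy Dy]] := dD0 (ball x d)°
  (ex_intro _ x (nbhs_singleton (nbhs_interior (@nbhsx_ballx _ _ x d d0)))) (@open_interior _ _).
have [i _ gi] := gs y Dy.
set m := choice.pickle (i, k).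
have Wm : W m = ball (g i) d by rewrite /W /m choice.pickleK.
have xW : W m x by rewrite Wm gi; apply: ball_sym; exact: interior_subset Iy.
have WU : W m `<=` U.
  rewrite Wm gi => z Hz; apply: HU.
  have := ball_triangle (interior_subset Iy) Hz.
  apply: le_ball; rewrite [leRHS]splitr lerD // ltW //.
have fxK : (K m)° (f x).
  apply: contrapT => nI.
  have Mfx : M (f x).
    exists m => //; split => //; apply: subset_closure; by exists x.
  have [n _ Fn] := MFX x Mfx.
  exact: (Gx n I (subset_closure Fn)).
apply: filterS fxK; apply: closureS; exact: image_subset.
Qed.

Unset Implicit Arguments.
Theorem mainTheorem7 (R : realType) (X Y : completePseudoMetricType R)
  (polX : polish_space X) (polY : polish_space Y)
  (f : X -> Y) (cf : continuous f) :
  category_preserving f <-> dense (locally_dense_points f).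
Proof.
case: polX => _ sX; split; [move=> h; apply: (@dir1 R X Y sX f cf h) | exact: dir2 cf].
Qed.
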